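(* Let $\mathcal{A}$ be a strictly locally finitely presentable category and $\mathcal{B}$ a locally finitely presentable category in which the finitely generated objects are precisely the finitely presentable ones. Then a functor $F\colon\mathcal{A}\to\mathcal{B}$ is finitary if and only if it is finitely bounded.
   Context: An object $A$ is finitely presentable if $\mathcal{A}(A,-)$ preserves filtered colimits, and finitely generated if $\mathcal{A}(A,-)$ preserves colimits of filtered diagrams all of whose connecting morphisms are monomorphisms. A category is locally finitely presentable (lfp) if it is cocomplete, has (up to isomorphism) only a set of finitely presentable objects, and every object is a filtered colimit of finitely presentable objects. A functor is finitary if it preserves filtered colimits. A finitely generated subobject of $A$ is a monomorphism $m\colon M\rightarrowtail A$ with $M$ finitely generated. A functor $F\colon\mathcal{A}\to\mathcal{B}$ is finitely bounded if for every object $A$ and every finitely generated subobject $m_0\colon M_0\rightarrowtail FA$ there exist a finitely generated subobject $m\colon M\rightarrowtail A$ and $g\colon M_0\to FM$ with $m_0=Fm\cdot g$. A morphism $u\colon X\to Y$ is called finitary if it factorizes as $u=w\cdot v$ with $v\colon X\to C$, $w\colon C\to Y$ and $C$ finitely presentable. An lfp category is strictly lfp if for every object $A$ and every finitely generated subobject $m\colon M\rightarrowtail A$ there is a finitary endomorphism $u\colon A\to A$ with $u\cdot m=m$. *)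

(* Defs.v *)
From Stdlib Require Import FunctionalExtensionality.

Set Implicit Arguments.
Unset Strict Implicit.

(** Locally small categories: objects in an arbitrary [Type], hom-sets small
    (in [Set]).  Small categories (diagram shapes) are those with [O : Set]. *)
Record Cat (O : Type) : Type := {
  hom : O -> O -> Set;
  idm : forall a, hom a a;
  comp : forall a b c, hom b c -> hom a b -> hom a c;
  comp_idl : forall a b (f : hom a b), comp (idm b) f = f;
  comp_idr : forall a b (f : hom a b), comp f (idm a) = f;
  comp_assoc : forall a b c d (f : hom c d) (g : hom b c) (h : hom a b),
      comp f (comp g h) = comp (comp f g) h
}.

Arguments hom {O} C a b : rename.
Arguments idm {O} C a : rename.
Arguments comp {O} C {a b c} f g : rename.

Record Functor (O1 O2 : Type) (C : Cat O1) (D : Cat O2) : Type := {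
  fobj : O1 -> O2;
  fmap : forall a b, hom C a b -> hom D (fobj a) (fobj b);
  fmap_id : forall a, fmap (idm C a) = idm D (fobj a);
  fmap_comp : forall a b c (f : hom C b c) (g : hom C a b),
      fmap (comp C f g) = comp D (fmap f) (fmap g)
}.

Arguments fobj {O1 O2 C D} F x : rename.
Arguments fmap {O1 O2 C D} F {a b} f : rename.

Section Fcomp.
Variables (O1 O2 O3 : Type) (C1 : Cat O1) (C2 : Cat O2) (C3 : Cat O3).
Variables (F : Functor C2 C3) (G : Functor C1 C2).

Lemma Fcomp_id a :
  fmap F (fmap G (idm C1 a)) = idm C3 (fobj F (fobj G a)).
Proof. now rewrite (fmap_id G), (fmap_id F). Qed.

Lemma Fcomp_comp a b c (f : hom C1 b c) (g : hom C1 a b) :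
  fmap F (fmap G (comp C1 f g)) = comp C3 (fmap F (fmap G f)) (fmap F (fmap G g)).
Proof. now rewrite (fmap_comp G), (fmap_comp F). Qed.

Definition Fcomp : Functor C1 C3 :=
  {| fobj := fun x => fobj F (fobj G x);
     fmap := fun a b f => fmap F (fmap G f);
     fmap_id := Fcomp_id;
     fmap_comp := Fcomp_comp |}.
End Fcomp.

Definition SetCat : Cat Set :=
  {| hom := fun X Y : Set => X -> Y;
     idm := fun X (x : X) => x;
     comp := fun X Y Z (f : Y -> Z) (g : X -> Y) (x : X) => f (g x);
     comp_idl := fun _ _ _ => eq_refl;
     comp_idr := fun _ _ _ => eq_refl;
     comp_assoc := fun _ _ _ _ _ _ _ => eq_refl |}.

Section HomF.
Variables (O : Type) (C : Cat O) (A : O).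

Lemma HomF_id a : (fun g : hom C A a => comp C (idm C a) g) = (fun g => g).
Proof. apply functional_extensionality; intro g; apply comp_idl. Qed.

Lemma HomF_comp a b c (f : hom C b c) (g : hom C a b) :
  (fun h : hom C A a => comp C (comp C f g) h)
  = (fun h => comp C f (comp C g h)).
Proof. apply functional_extensionality; intro h; symmetry; apply comp_assoc. Qed.

Definition HomF : Functor C SetCat :=
  @Build_Functor O Set C SetCat (fun X => hom C A X)
     (fun a b (f : hom C a b) (g : hom C A a) => comp C f g) HomF_id HomF_comp.

End HomF.

Unset Implicit Arguments.
Section Notions.
Variables (O : Type) (C : Cat O).

Definition is_cocone (SJ : Set) (J : Cat SJ) (D : Functor J C) (X : O)
    (c : forall j, hom C (fobj D j) X) : Prop :=
  forall i j (f : hom J i j), comp C (c j) (fmap D f) = c i.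

Definition is_colimit (SJ : Set) (J : Cat SJ) (D : Functor J C) (X : O)
    (c : forall j, hom C (fobj D j) X) : Prop :=
  is_cocone SJ J D X c /\
  forall (Y : O) (d : forall j, hom C (fobj D j) Y), is_cocone SJ J D Y d ->
    exists u : hom C X Y,
      (forall j, comp C u (c j) = d j) /\
      (forall u' : hom C X Y, (forall j, comp C u' (c j) = d j) -> u' = u).

Definition cocomplete : Prop :=
  forall (SJ : Set) (J : Cat SJ) (D : Functor J C),
    exists (X : O) (c : forall j, hom C (fobj D j) X), is_colimit SJ J D X c.

Definition mono (a b : O) (m : hom C a b) : Prop :=
  forall x (f g : hom C x a), comp C m f = comp C m g -> f = g.

Definition iso (a b : O) : Prop :=
  exists (f : hom C a b) (g : hom C b a),
    comp C g f = idm C a /\ comp C f g = idm C b.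

End Notions.
Arguments is_cocone {O} C {SJ J} D {X} c.
Arguments is_colimit {O} C {SJ J} D {X} c.
Arguments mono {O} C {a b} m.
Arguments iso {O} C a b.
Set Implicit Arguments.

Definition filtered (SJ : Set) (J : Cat SJ) : Prop :=
  inhabited SJ /\
  (forall i j : SJ, exists (k : SJ) (_ : hom J i k) (_ : hom J j k), True) /\
  (forall (i j : SJ) (f g : hom J i j),
     exists (k : SJ) (h : hom J j k), comp J h f = comp J h g).

Definition mono_diagram (O : Type) (C : Cat O) (SJ : Set) (J : Cat SJ)
    (D : Functor J C) : Prop :=
  forall i j (f : hom J i j), mono C (fmap D f).

Definition preserves_colimits_of (O1 O2 : Type) (C : Cat O1) (E : Cat O2)
    (F : Functor C E)
    (P : forall (SJ : Set) (J : Cat SJ), Functor J C -> Prop) : Prop :=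
  forall (SJ : Set) (J : Cat SJ) (D : Functor J C) (X : O1)
         (c : forall j, hom C (fobj D j) X),
    P SJ J D -> is_colimit C D c ->
    is_colimit E (Fcomp F D) (fun j => fmap F (c j)).

Definition finitary (O1 O2 : Type) (C : Cat O1) (E : Cat O2)
    (F : Functor C E) : Prop :=
  preserves_colimits_of F (fun SJ J _ => filtered J).

Definition fin_pres (O : Type) (C : Cat O) (A : O) : Prop :=
  finitary (HomF C A).

Definition fin_gen (O : Type) (C : Cat O) (A : O) : Prop :=
  preserves_colimits_of (HomF C A)
    (fun SJ J D => filtered J /\ mono_diagram D).

Definition lfp (O : Type) (C : Cat O) : Prop :=
  cocomplete O C /\
  (exists (I : Set) (g : I -> O),
     (forall i, fin_pres C (g i)) /\
     (forall A, fin_pres C A -> exists i, iso C A (g i))) /\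
  (forall A : O, exists (SJ : Set) (J : Cat SJ) (D : Functor J C)
                        (c : forall j, hom C (fobj D j) A),
     filtered J /\ (forall j, fin_pres C (fobj D j)) /\ is_colimit C D c).

Definition finitary_mor (O : Type) (C : Cat O) (X Y : O) (u : hom C X Y) : Prop :=
  exists (K : O) (v : hom C X K) (w : hom C K Y),
    fin_pres C K /\ u = comp C w v.

Definition strictly_lfp (O : Type) (C : Cat O) : Prop :=
  lfp C /\
  forall (A M : O) (m : hom C M A), mono C m -> fin_gen C M ->
    exists u : hom C A A, finitary_mor u /\ comp C u m = m.

Definition finitely_bounded (O1 O2 : Type) (C : Cat O1) (E : Cat O2)
    (F : Functor C E) : Prop :=
  forall (A : O1) (M0 : O2) (m0 : hom E M0 (fobj F A)),
    mono E m0 -> fin_gen E M0 ->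
    exists (M : O1) (m : hom C M A),
      mono C m /\ fin_gen C M /\
      exists g : hom E M0 (fobj F M), m0 = comp E (fmap F m) g.

(* Main.v *)
Require Import Defs.
From Stdlib Require Import FunctionalExtensionality ProofIrrelevance ClassicalEpsilon PropExtensionality Arith Lia.

Lemma colim_ext {O} {C : Cat O} {SJ : Set} {J : Cat SJ} {D : Functor J C} {X}
  {c : forall j, hom C (fobj D j) X} (H : is_colimit C D c) {Y} (u u' : hom C X Y) :
  (forall j, comp C u (c j) = comp C u' (c j)) -> u = u'.
Proof.
  intros E. destruct H as [Hc Hu].
  destruct (Hu Y (fun j => comp C u (c j))) as [v [Hv1 Hv2]].
  { intros i j f. rewrite <- comp_assoc, Hc. reflexivity. }
  rewrite (Hv2 u (fun j => eq_refl)), (Hv2 u' (fun j => eq_sym (E j))). reflexivity.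
Qed.

Lemma fmapS {SJ : Set} {J : Cat SJ} (G : Functor J SetCat) a b c (f : hom J b c) (g : hom J a b) x :
  fmap G (comp J f g) x = fmap G f (fmap G g x).
Proof. rewrite fmap_comp. reflexivity. Qed.

Lemma fmapS_id {SJ : Set} {J : Cat SJ} (G : Functor J SetCat) a x :
  fmap G (idm J a) x = x.
Proof. rewrite fmap_id. reflexivity. Qed.

Section SetColim.
Variables (SJ : Set) (J : Cat SJ) (G : Functor J SetCat).

Definition frel (p q : {j : SJ & fobj G j}) : Prop :=
  exists k (a : hom J (projT1 p) k) (b : hom J (projT1 q) k),
    fmap G a (projT2 p) = fmap G b (projT2 q).

Lemma frel_refl p : frel p p.
Proof. exists (projT1 p), (idm J _), (idm J _). reflexivity. Qed.

Lemma frel_sym p q : frel p q -> frel q p.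
Proof. intros [k [a [b H]]]. exists k, b, a. auto. Qed.

Lemma frel_trans (HJ : filtered J) p q r : frel p q -> frel q r -> frel p r.
Proof.
  intros [k [a [b H]]] [k' [a' [b' H']]].
  destruct HJ as [_ [H2 H3]].
  destruct (H2 k k') as [l [h [h' _]]].
  destruct (H3 _ _ (comp J h b) (comp J h' a')) as [l' [e He]].
  exists l', (comp J e (comp J h a)), (comp J e (comp J h' b')).
  assert (He' := f_equal (fun g => fmap G g (projT2 q)) He). simpl in He'.
  rewrite !fmapS in He'. rewrite !fmapS, H, He', H'. reflexivity.
Qed.

Lemma set_colim_surj (X : Set) (c : forall j, hom SetCat (fobj G j) X) :
  is_colimit SetCat G c -> forall x : X, exists j (y : fobj G j), c j y = x.
Proof.
  intros Hc x.
  pose (u1 := (fun _ : X => true) : hom SetCat X bool).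
  pose (u2 := (fun z : X => if excluded_middle_informative (exists j (y : fobj G j), c j y = z)
                          then true else false) : hom SetCat X bool).
  assert (E : u1 = u2).
  { apply (colim_ext Hc). intro j. simpl. apply functional_extensionality. intro y.
    unfold u2. destruct excluded_middle_informative as [_|n]; [reflexivity| exfalso; apply n; eauto]. }
  assert (E2 := f_equal (fun h => h x) E). unfold u1, u2 in E2. simpl in E2.
  destruct excluded_middle_informative; [assumption|discriminate].
Qed.

Lemma set_colim_inj (HJ : filtered J) (X : Set) (c : forall j, hom SetCat (fobj G j) X) :
  is_colimit SetCat G c -> forall i j x y, c i x = c j y -> frel (existT _ i x) (existT _ j y).
Proof.
  intros [Hc Hu] i j x y Hxy.
  pose (r := fun p : {j : SJ & fobj G j} => epsilon (inhabits p) (frel p)).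
  assert (Hr : forall p, frel p (r p)).
  { intro p. unfold r. apply epsilon_spec. exists p. apply frel_refl. }
  assert (Hr2 : forall p q, frel p q -> r p = r q).
  { intros p q H. unfold r.
    assert (E : frel p = frel q).
    { apply functional_extensionality. intro z. apply propositional_extensionality. split; intro H'.
      - apply (frel_trans HJ _ p); [apply frel_sym|]; auto.
      - apply (frel_trans HJ _ q); auto. }
    assert (E' : inhabits p = inhabits q) by apply proof_irrelevance.
    rewrite E, E'. reflexivity. }
  destruct (Hu {j : SJ & fobj G j} (fun j (y : fobj G j) => r (existT _ j y))) as [u [Hu1 _]].
  { intros i' j' f. simpl. apply functional_extensionality. intro z. apply Hr2.
    exists j', (idm J _), f. simpl. rewrite fmapS_id. reflexivity. }
  assert (E1 := f_equal (fun h => h x) (Hu1 i)). assert (E2 := f_equal (fun h => h y) (Hu1 j)).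
  simpl in E1, E2. rewrite Hxy in E1. rewrite E1 in E2.
  apply (frel_trans HJ _ (r (existT _ i x))); [apply Hr|]. rewrite E2. apply frel_sym, Hr.
Qed.

Lemma set_colim_intro (X : Set) (c : forall j, hom SetCat (fobj G j) X) :
  is_cocone SetCat G c ->
  (forall x : X, exists j (y : fobj G j), c j y = x) ->
  (forall i j x y, c i x = c j y -> frel (existT _ i x) (existT _ j y)) ->
  is_colimit SetCat G c.
Proof.
  intros Hc Hs Hi. split; [exact Hc|]. intros Y d Hd.
  assert (Hd' : forall i j (f : hom J i j) x, d j (fmap G f x) = d i x).
  { intros i j f x. exact (f_equal (fun h => h x) (Hd i j f)). }
  assert (Hwd : forall i j x y, c i x = c j y -> d i x = d j y).
  { intros i j x y H. destruct (Hi i j x y H) as [k [a [b E]]]. simpl in *.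
    rewrite <- (Hd' _ _ a), <- (Hd' _ _ b), E. reflexivity. }
  assert (Hs' : forall x : X, exists p : {j : SJ & fobj G j}, c (projT1 p) (projT2 p) = x).
  { intro x. destruct (Hs x) as [j [y H]]. exists (existT _ j y). exact H. }
  pose (pick := fun x => proj1_sig (constructive_indefinite_description _ (Hs' x))).
  assert (Hpick : forall x, c (projT1 (pick x)) (projT2 (pick x)) = x).
  { intro x. unfold pick. destruct constructive_indefinite_description. assumption. }
  exists (fun x => d (projT1 (pick x)) (projT2 (pick x))). split.
  - intro j. simpl. apply functional_extensionality. intro y. apply Hwd. rewrite Hpick. reflexivity.
  - intros u' Hu'. simpl. apply functional_extensionality. intro x.
    rewrite <- (Hpick x) at 1. exact (f_equal (fun h => h (projT2 (pick x))) (Hu' _)).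
Qed.

End SetColim.

Section FP.
Variables (O : Type) (C : Cat O).

Lemma fp_fact (Q : O) (HQ : fin_pres C Q) (SJ : Set) (J : Cat SJ) (D : Functor J C) X
  (c : forall j, hom C (fobj D j) X) : filtered J -> is_colimit C D c ->
  forall x : hom C Q X, exists j h, x = comp C (c j) h.
Proof.
  intros HJ Hc x. assert (H := HQ SJ J D X c HJ Hc).
  destruct (set_colim_surj _ _ _ _ _ H x) as [j [y E]]. simpl in E. exists j, y. auto.
Qed.

Lemma fp_ess2 (Q : O) (HQ : fin_pres C Q) (SJ : Set) (J : Cat SJ) (D : Functor J C) X
  (c : forall j, hom C (fobj D j) X) : filtered J -> is_colimit C D c ->
  forall i j (h : hom C Q (fobj D i)) (h' : hom C Q (fobj D j)), comp C (c i) h = comp C (c j) h' ->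
  exists k (a : hom J i k) (b : hom J j k), comp C (fmap D a) h = comp C (fmap D b) h'.
Proof.
  intros HJ Hc i j h h' E. assert (H := HQ SJ J D X c HJ Hc).
  destruct (set_colim_inj _ _ _ HJ _ _ H i j h h' E) as [k [a [b E']]]. simpl in E'.
  exists k, a, b. auto.
Qed.

Lemma fp_ess (Q : O) (HQ : fin_pres C Q) (SJ : Set) (J : Cat SJ) (D : Functor J C) X
  (c : forall j, hom C (fobj D j) X) : filtered J -> is_colimit C D c ->
  forall j (h h' : hom C Q (fobj D j)), comp C (c j) h = comp C (c j) h' ->
  exists k (a : hom J j k), comp C (fmap D a) h = comp C (fmap D a) h'.
Proof.
  intros HJ Hc j h h' E. destruct (fp_ess2 Q HQ SJ J D X c HJ Hc j j h h' E) as [k [a [b E']]].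
  destruct HJ as [_ [_ H3]]. destruct (H3 _ _ a b) as [l [e He]].
  exists l, (comp J e a). transitivity (comp C (fmap D (comp J e b)) h').
  - rewrite !fmap_comp, <- !comp_assoc, E'. reflexivity.
  - rewrite He. reflexivity.
Qed.

Lemma points_ext (HC : lfp C) Z Y (f1 f2 : hom C Z Y) :
  (forall Q (q : hom C Q Z), fin_pres C Q -> comp C f1 q = comp C f2 q) -> f1 = f2.
Proof.
  intros H. destruct HC as [_ [_ H3]]. destruct (H3 Z) as [SJ [J [D [c [_ [Hfp Hc]]]]]].
  apply (colim_ext Hc). intro j. apply H. apply Hfp.
Qed.

Lemma colim_inj_mono (HC : lfp C) (SJ : Set) (J : Cat SJ) (D : Functor J C) X
  (c : forall j, hom C (fobj D j) X) : filtered J -> mono_diagram D -> is_colimit C D c ->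
  forall j, mono C (c j).
Proof.
  intros HJ HD Hc j Z f g E. apply (points_ext HC). intros Q q HQ.
  assert (E' : comp C (c j) (comp C f q) = comp C (c j) (comp C g q)) by (rewrite !comp_assoc, E; reflexivity).
  destruct (fp_ess Q HQ SJ J D X c HJ Hc j _ _ E') as [k [a Ea]].
  apply (HD _ _ a). exact Ea.
Qed.

End FP.

Definition shom (S : Set) (a b : option S) : Set :=
  match a, b with
  | None, None => unit
  | Some _, None => bool
  | Some s, Some s' => {_ : unit | s = s'}
  | None, Some _ => Empty_set
  end.
Arguments shom {S} a b.

Definition sidm (S : Set) (a : option S) : shom a a :=
  match a return shom a a with None => tt | Some s => exist _ tt eq_refl end.
Arguments sidm {S} a.

Definition scomp (S : Set) (a b c : option S) : shom b c -> shom a b -> shom a c.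
Proof.
  destruct a as [sa|], b as [sb|], c as [sc|]; simpl; intros f g.
  - exact (exist _ tt (eq_trans (proj2_sig g) (proj2_sig f))).
  - exact f.
  - destruct f.
  - exact g.
  - destruct g.
  - destruct g.
  - destruct f.
  - exact tt.
Defined.
Arguments scomp {S} {a b c} f g.

Ltac sclean := repeat match goal with
  | x : unit |- _ => destruct x
  | x : Empty_set |- _ => destruct x
  | x : {_ : unit | _} |- _ => let p := fresh in destruct x as [[] p]
  end.

Lemma scomp_idl (S : Set) (a b : option S) (f : shom a b) : scomp (sidm b) f = f.
Proof.
  destruct a, b; simpl in *; sclean; try reflexivity; simpl; f_equal; apply proof_irrelevance.
Qed.
Lemma scomp_idr (S : Set) (a b : option S) (f : shom a b) : scomp f (sidm a) = f.
Proof.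
  destruct a, b; simpl in *; sclean; try reflexivity; simpl; f_equal; apply proof_irrelevance.
Qed.
Lemma scomp_assoc (S : Set) (a b c d : option S) (f : shom c d) (g : shom b c) (h : shom a b) :
  scomp f (scomp g h) = scomp (scomp f g) h.
Proof.
  destruct a, b, c, d; simpl in *; sclean; try reflexivity; simpl; f_equal; apply proof_irrelevance.
Qed.

Definition SCat (S : Set) : Cat (option S) :=
  {| hom := @shom S; idm := @sidm S; comp := @scomp S;
     comp_idl := @scomp_idl S; comp_idr := @scomp_idr S; comp_assoc := @scomp_assoc S |}.

Section StepDiag.
Variables (O : Type) (C : Cat O) (S : Set) (E : O) (Q : S -> O) (x y : forall s, hom C (Q s) E).

Definition sobj (a : option S) : O := match a with None => E | Some s => Q s end.

Definition smap (a b : option S) : shom a b -> hom C (sobj a) (sobj b).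
Proof.
  destruct a as [sa|], b as [sb|]; simpl; intros f.
  - destruct f as [_ p]. subst. exact (idm C _).
  - exact (if f then x sa else y sa).
  - destruct f.
  - exact (idm C E).
Defined.

Lemma smap_id a : smap _ _ (sidm a) = idm C (sobj a).
Proof. destruct a; reflexivity. Qed.

Lemma smap_comp a b c (f : shom b c) (g : shom a b) :
  smap _ _ (scomp f g) = comp C (smap _ _ f) (smap _ _ g).
Proof.
  destruct a as [sa|], b as [sb|], c as [sc|]; simpl in *; sclean; simpl.
  all: repeat match goal with H : _ = _ |- _ => subst end; simpl.
  all: rewrite ?comp_idl, ?comp_idr; try reflexivity.
Qed.

Definition SDiag : Functor (SCat S) C :=
  @Build_Functor _ _ (SCat S) C sobj smap smap_id smap_comp.

End StepDiag.

Section Step.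
Variables (O : Type) (C : Cat O) (HC : lfp C) (A : O).

Definition StepSpec (E : O) (m : hom C E A) (p : {E' : O & (hom C E E' * hom C E' A)%type}) : Prop :=
  comp C (snd (projT2 p)) (fst (projT2 p)) = m /\
  (forall Q (a b : hom C Q E), fin_pres C Q -> comp C m a = comp C m b ->
     comp C (fst (projT2 p)) a = comp C (fst (projT2 p)) b) /\
  (forall Y (a b : hom C (projT1 p) Y), comp C a (fst (projT2 p)) = comp C b (fst (projT2 p)) -> a = b) /\
  (forall Y (g : hom C E Y), (forall Q (a b : hom C Q E), fin_pres C Q -> comp C m a = comp C m b ->
       comp C g a = comp C g b) -> exists g', comp C g' (fst (projT2 p)) = g).

Lemma step_ex (E : O) (m : hom C E A) : exists p, StepSpec E m p.
Proof.
  destruct HC as [Hcc [[I [gi [Hgi1 Hgi2]]] _]].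
  pose (S := {s : {i : I & (hom C (gi i) E * hom C (gi i) E)%type} |
                comp C m (fst (projT2 s)) = comp C m (snd (projT2 s))}).
  pose (Q := fun s : S => gi (projT1 (proj1_sig s))).
  pose (x := fun s : S => fst (projT2 (proj1_sig s)) : hom C (Q s) E).
  pose (y := fun s : S => snd (projT2 (proj1_sig s)) : hom C (Q s) E).
  pose (D := SDiag O C S E Q x y).
  destruct (Hcc _ _ D) as [X [k [Hk Hku]]].
  assert (Hkx : forall s, comp C (k None) (x s) = k (Some s)) by (intro s; exact (Hk (Some s) None true)).
  assert (Hky : forall s, comp C (k None) (y s) = k (Some s)) by (intro s; exact (Hk (Some s) None false)).
  pose (d := fun a => match a return hom C (fobj D a) A with None => m | Some s => comp C m (x s) end).
  destruct (Hku A d) as [m' [Hm1 Hm2]].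
  { intros [i|] [j|] f; simpl in *; sclean.
    - subst. simpl. apply comp_idr.
    - destruct f; [reflexivity|]. symmetry. exact (proj2_sig i).
    - apply comp_idr. }
  exists (existT _ X (k None, m')). split; [|split; [|split]]; simpl.
  - exact (Hm1 None).
  - intros Q' a b HQ' Hab. destruct (Hgi2 Q' HQ') as [i [phi [psi [Hpp _]]]].
    assert (Hs : comp C m (comp C a psi) = comp C m (comp C b psi)) by (rewrite !comp_assoc, Hab; reflexivity).
    pose (s := exist (fun s : {i : I & (hom C (gi i) E * hom C (gi i) E)%type} =>
                comp C m (fst (projT2 s)) = comp C m (snd (projT2 s))) (existT _ i (comp C a psi, comp C b psi)) Hs : S).
    assert (E1 : comp C (k None) (comp C a psi) = comp C (k None) (comp C b psi)).
    { change (comp C (k None) (x s) = comp C (k None) (y s)). rewrite Hkx, Hky. reflexivity. }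
    rewrite <- (comp_idr a), <- (comp_idr b), <- Hpp, !comp_assoc.
    rewrite <- (comp_assoc _ a psi), <- (comp_assoc _ b psi). exact (f_equal (fun z => comp C z phi) E1).
  - intros Y a b Hab. apply (colim_ext (conj Hk Hku)). intros [s|].
    + rewrite <- Hkx, !comp_assoc. exact (f_equal (fun z => comp C z (x s)) Hab).
    + exact Hab.
  - intros Y g Hg.
    pose (d' := fun a => match a return hom C (fobj D a) Y with None => g | Some s => comp C g (x s) end).
    destruct (Hku Y d') as [g' [Hg1 _]].
    { intros [i|] [j|] f; simpl in *; sclean.
      - subst. simpl. apply comp_idr.
      - destruct f; [reflexivity|]. symmetry. apply Hg; [apply Hgi1|exact (proj2_sig i)].
      - apply comp_idr. }
    exists g'. exact (Hg1 None).
Qed.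

Definition step (E : O) (m : hom C E A) := proj1_sig (constructive_indefinite_description _ (step_ex E m)).
Lemma step_spec E m : StepSpec E m (step E m).
Proof. unfold step. destruct constructive_indefinite_description. assumption. Qed.

End Step.

Definition nhom (n m : nat) : Set := {_ : unit | n <= m}.
Definition nidm (n : nat) : nhom n n := exist _ tt (le_n n).
Definition ncomp (a b c : nat) (f : nhom b c) (g : nhom a b) : nhom a c :=
  exist _ tt (Nat.le_trans _ _ _ (proj2_sig g) (proj2_sig f)).
Lemma nhom_eq n m (f g : nhom n m) : f = g.
Proof. destruct f as [[] p], g as [[] q]. f_equal. apply proof_irrelevance. Qed.
Definition NCat : Cat nat :=
  {| hom := nhom; idm := nidm; comp := ncomp;
     comp_idl := fun _ _ _ => nhom_eq _ _ _ _;
     comp_idr := fun _ _ _ => nhom_eq _ _ _ _;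
     comp_assoc := fun _ _ _ _ _ _ _ => nhom_eq _ _ _ _ |}.

Lemma NCat_filtered : filtered NCat.
Proof.
  split; [exact (inhabits 0)|split].
  - intros i j. exists (max i j), (exist _ tt (Nat.le_max_l i j)), (exist _ tt (Nat.le_max_r i j)). trivial.
  - intros i j f g. exists j, (nidm j). apply nhom_eq.
Qed.

Section Image.
Variables (O : Type) (C : Cat O) (HC : lfp C) (P A : O) (f : hom C P A) (HP : fin_pres C P).

Fixpoint stage (n : nat) : {E : O & (hom C P E * hom C E A)%type} :=
  match n with
  | 0 => existT _ P (idm C P, f)
  | S n => let s := stage n in let p := step O C HC A (projT1 s) (snd (projT2 s)) in
           existT _ (projT1 p) (comp C (fst (projT2 p)) (fst (projT2 s)), snd (projT2 p))
  end.

Definition En n := projT1 (stage n).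
Definition en n : hom C P (En n) := fst (projT2 (stage n)).
Definition mn n : hom C (En n) A := snd (projT2 (stage n)).
Definition tn n : hom C (En n) (En (S n)) := fst (projT2 (step O C HC A (En n) (mn n))).

Lemma tn_spec n : StepSpec O C A (En n) (mn n) (step O C HC A (En n) (mn n)).
Proof. apply step_spec. Qed.

Lemma tn_en n : comp C (tn n) (en n) = en (S n).
Proof. reflexivity. Qed.
Lemma mn_tn n : comp C (mn (S n)) (tn n) = mn n.
Proof. apply (tn_spec n). Qed.
Lemma tn_coeq n Q (a b : hom C Q (En n)) : fin_pres C Q -> comp C (mn n) a = comp C (mn n) b ->
  comp C (tn n) a = comp C (tn n) b.
Proof. apply (tn_spec n). Qed.
Lemma tn_epi n Y (a b : hom C (En (S n)) Y) : comp C a (tn n) = comp C b (tn n) -> a = b.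
Proof. apply (tn_spec n). Qed.
Lemma tn_ext n Y (g : hom C (En n) Y) :
  (forall Q (a b : hom C Q (En n)), fin_pres C Q -> comp C (mn n) a = comp C (mn n) b -> comp C g a = comp C g b) ->
  exists g', comp C g' (tn n) = g.
Proof. apply (tn_spec n). Qed.

Lemma mn_en n : comp C (mn n) (en n) = f.
Proof.
  induction n as [|n IH]; [apply comp_idr|].
  rewrite <- tn_en, comp_assoc, mn_tn. exact IH.
Qed.

Lemma en_epi n Y (a b : hom C (En n) Y) : comp C a (en n) = comp C b (en n) -> a = b.
Proof.
  revert Y a b. induction n as [|n IH]; intros Y a b H.
  - change (comp C a (idm C P) = comp C b (idm C P)) in H. rewrite !comp_idr in H. exact H.
  - rewrite <- tn_en, !comp_assoc in H. apply tn_epi, IH, H.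
Qed.

Lemma T_ex n m : n <= m -> exists T : hom C (En n) (En m), comp C T (en n) = en m.
Proof.
  induction 1 as [|m H IH].
  - exists (idm C _). apply comp_idl.
  - destruct IH as [T HT]. exists (comp C (tn m) T). rewrite <- comp_assoc, HT. reflexivity.
Qed.

Definition Tm n m (h : nhom n m) : hom C (En n) (En m) :=
  proj1_sig (constructive_indefinite_description _ (T_ex n m (proj2_sig h))).
Lemma Tm_spec n m h : comp C (Tm n m h) (en n) = en m.
Proof. unfold Tm. destruct constructive_indefinite_description. assumption. Qed.

Lemma Tm_id n : Tm n n (nidm n) = idm C (En n).
Proof. apply en_epi. rewrite Tm_spec, comp_idl. reflexivity. Qed.
Lemma Tm_comp a b c (g : nhom b c) (h : nhom a b) : Tm a c (ncomp a b c g h) = comp C (Tm b c g) (Tm a b h).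
Proof. apply en_epi. rewrite Tm_spec, <- comp_assoc, !Tm_spec. reflexivity. Qed.

Definition Chain : Functor NCat C :=
  @Build_Functor _ _ NCat C En Tm Tm_id Tm_comp.

Lemma mn_Tm n m h : comp C (mn m) (Tm n m h) = mn n.
Proof. apply en_epi. rewrite <- comp_assoc, Tm_spec, !mn_en. reflexivity. Qed.

Lemma Tm_tn n h : Tm n (S n) h = tn n.
Proof. apply en_epi. rewrite Tm_spec. reflexivity. Qed.

Lemma image_lemma : exists M (e : hom C P M) (m : hom C M A),
  mono C m /\ fin_gen C M /\ f = comp C m e.
Proof.
  destruct HC as [Hcc _].
  destruct (Hcc _ _ Chain) as [M [io [Hio Hiou]]].
  assert (Hcol : is_colimit C Chain io) by (split; assumption).
  assert (Hio' : forall n m (h : nhom n m), comp C (io m) (Tm n m h) = io n) by exact Hio.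
  destruct (Hiou A mn) as [m [Hm1 _]].
  { intros i j h. apply mn_Tm. }
  assert (Hm1' : forall n, comp C m (io n) = mn n) by exact Hm1.
  assert (Hio_en : forall n, comp C (io n) (en n) = io 0).
  { intro n. pose (h := exist (fun _ : unit => 0 <= n) tt (Nat.le_0_l n) : nhom 0 n).
    rewrite <- (Hio' 0 n h). f_equal. rewrite <- (Tm_spec 0 n h). change (en 0) with (idm C P). apply comp_idr. }
  assert (Hepi : forall Y (a b : hom C M Y), comp C a (io 0) = comp C b (io 0) -> a = b).
  { intros Y a b H. apply (colim_ext Hcol). intro n. apply en_epi.
    rewrite <- !comp_assoc. change (fobj Chain n) with (En n). rewrite Hio_en. exact H. }
  exists M, (io 0), m. split; [|split].
  -
    intros Z x y Hxy. apply (points_ext O C HC). intros Q q HQ.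
    destruct (fp_fact O C Q HQ _ _ Chain M io NCat_filtered Hcol (comp C x q)) as [n1 [a1 Ha1]].
    destruct (fp_fact O C Q HQ _ _ Chain M io NCat_filtered Hcol (comp C y q)) as [n2 [a2 Ha2]].
    set (N := max n1 n2).
    pose (h1 := exist (fun _ : unit => n1 <= N) tt (Nat.le_max_l n1 n2) : nhom n1 N).
    pose (h2 := exist (fun _ : unit => n2 <= N) tt (Nat.le_max_r n1 n2) : nhom n2 N).
    assert (E1 : comp C x q = comp C (io N) (comp C (Tm _ _ h1) a1)).
    { rewrite Ha1, comp_assoc. f_equal. symmetry. apply Hio'. }
    assert (E2 : comp C y q = comp C (io N) (comp C (Tm _ _ h2) a2)).
    { rewrite Ha2, comp_assoc. f_equal. symmetry. apply Hio'. }
    rewrite E1, E2.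
    assert (E3 : comp C (mn N) (comp C (Tm _ _ h1) a1) = comp C (mn N) (comp C (Tm _ _ h2) a2)).
    { rewrite <- !Hm1', <- !comp_assoc.
      transitivity (comp C m (comp C x q)); [rewrite E1; reflexivity|].
      rewrite comp_assoc, Hxy, <- comp_assoc, E2. reflexivity. }
    assert (E4 := tn_coeq N Q _ _ HQ E3).
    pose (h3 := exist (fun _ : unit => N <= S N) tt (Nat.le_succ_diag_r N) : nhom N (S N)).
    rewrite <- (Hio' N (S N) h3), Tm_tn, <- !comp_assoc. f_equal. exact E4.
  -
    intros SJ J G Z c [HJ HG] Hc.
    assert (Hcm := colim_inj_mono O C HC SJ J G Z c HJ HG Hc).
    apply set_colim_intro.
    + intros i j g. simpl. apply functional_extensionality. intro z.
      rewrite comp_assoc. f_equal. apply (proj1 Hc).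
    + intro z. simpl in z |- *.
      destruct (fp_fact O C P HP SJ J G Z c HJ Hc (comp C z (io 0))) as [j [h Hh]].
      assert (Hy : forall n, exists yn : hom C (En n) (fobj G j),
                 comp C yn (en n) = h /\ comp C (c j) yn = comp C z (io n)).
      { induction n as [|n [yn [Hy1 Hy2]]].
        - exists h. split; [apply comp_idr|]. symmetry. exact Hh.
        - destruct (tn_ext n _ yn) as [y' Hy'].
          { intros Q a b HQ Hab. apply (Hcm j). rewrite !comp_assoc, Hy2, <- !comp_assoc.
            pose (h3 := exist (fun _ : unit => n <= S n) tt (Nat.le_succ_diag_r n) : nhom n (S n)).
            rewrite <- (Hio' n (S n) h3), Tm_tn, <- !comp_assoc. change (fobj Chain (S n)) with (En (S n)).
            rewrite (tn_coeq n Q a b HQ Hab). reflexivity. }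
          exists y'. split.
          + rewrite <- tn_en, comp_assoc, Hy'. exact Hy1.
          + apply tn_epi. rewrite <- comp_assoc, Hy', Hy2, <- comp_assoc.
            pose (h3 := exist (fun _ : unit => n <= S n) tt (Nat.le_succ_diag_r n) : nhom n (S n)).
            rewrite <- (Hio' n (S n) h3), Tm_tn. reflexivity. }
      pose (yf := fun n => proj1_sig (constructive_indefinite_description _ (Hy n))).
      assert (Hyf : forall n, comp C (yf n) (en n) = h /\ comp C (c j) (yf n) = comp C z (io n)).
      { intro n. unfold yf. destruct constructive_indefinite_description. assumption. }
      destruct (Hiou (fobj G j) yf) as [y [Hy1 _]].
      { intros n1 n2 h12. simpl. apply en_epi. rewrite <- comp_assoc. change (fobj Chain n1) with (En n1).
        rewrite Tm_spec, (proj1 (Hyf n1)), (proj1 (Hyf n2)). reflexivity. }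
      exists j, y. apply (colim_ext Hcol). intro n. rewrite <- comp_assoc, Hy1. apply Hyf.
    + intros i j y y' Hyy. simpl in y, y', Hyy.
      assert (E : comp C (c i) (comp C y (io 0)) = comp C (c j) (comp C y' (io 0)))
        by (rewrite !comp_assoc, Hyy; reflexivity).
      destruct (fp_ess2 O C P HP SJ J G Z c HJ Hc i j _ _ E) as [k [a [b Hab]]].
      exists k, a, b. simpl. apply Hepi. rewrite <- !comp_assoc. exact Hab.
  - symmetry. exact (Hm1' 0).
Qed.

End Image.

Section Main.
Variables (OA OB : Type) (A : Cat OA) (B : Cat OB) (HA : strictly_lfp A) (HB : lfp B)
  (Hfg : forall X : OB, fin_gen B X <-> fin_pres B X) (F : Functor A B).

Lemma dir1 : finitary F -> finitely_bounded F.
Proof.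
  intros Hfin X M0 m0 Hm0 HM0. apply Hfg in HM0.
  destruct HA as [HAl _]. destruct HAl as [Hcc [Hrep Hpres]].
  destruct (Hpres X) as [SJ [J [D [c [HJ [Hfp Hc]]]]]].
  assert (Hcol := Hfin SJ J D X c HJ Hc).
  destruct (fp_fact OB B M0 HM0 SJ J (Fcomp F D) _ _ HJ Hcol m0) as [j [h Hh]].
  destruct (image_lemma OA A (conj Hcc (conj Hrep Hpres)) _ _ (c j) (Hfp j)) as [M [e [m [Hm [HM Hce]]]]].
  exists M, m. split; [exact Hm|split; [exact HM|]].
  exists (comp B (fmap F e) h). rewrite Hh. simpl. rewrite Hce, fmap_comp, comp_assoc. reflexivity.
Qed.

Hypothesis Hfb : finitely_bounded F.

Lemma SF Q (HQ : fin_pres B Q) W (g : hom B Q (fobj F W)) :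
  exists K (w : hom A K W) (k : hom B Q (fobj F K)), fin_pres A K /\ g = comp B (fmap F w) k.
Proof.
  destruct (image_lemma OB B HB _ _ g HQ) as [M0 [e0 [m0 [Hm0 [HM0 Hg]]]]].
  destruct (Hfb W M0 m0 Hm0 HM0) as [M [m [Hm [HM [g0 Hg0]]]]].
  destruct HA as [_ Hs]. destruct (Hs W M m Hm HM) as [u [[K [v [w [HK Hu]]]] Hum]].
  exists K, w, (comp B (fmap F (comp A v m)) (comp B g0 e0)). split; [exact HK|].
  rewrite Hg, Hg0. rewrite (comp_assoc (fmap F w)). rewrite <- fmap_comp.
  rewrite (comp_assoc w v m). rewrite <- Hu, Hum. rewrite comp_assoc. reflexivity.
Qed.

Lemma JF Q (HQ : fin_pres B Q) W (g1 g2 : hom B Q (fobj F W)) :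
  exists K (w : hom A K W) (k1 k2 : hom B Q (fobj F K)), fin_pres A K /\
    g1 = comp B (fmap F w) k1 /\ g2 = comp B (fmap F w) k2.
Proof.
  destruct (SF Q HQ W g1) as [K1 [w1 [k1 [HK1 H1]]]].
  destruct (SF Q HQ W g2) as [K2 [w2 [k2 [HK2 H2]]]].
  destruct HA as [[_ [_ Hpres]] _].
  destruct (Hpres W) as [SJ [J [D [c [HJ [Hfp Hc]]]]]].
  destruct (fp_fact OA A K1 HK1 SJ J D W c HJ Hc w1) as [j1 [a1 Ha1]].
  destruct (fp_fact OA A K2 HK2 SJ J D W c HJ Hc w2) as [j2 [a2 Ha2]].
  destruct HJ as [_ [HJ2 _]]. destruct (HJ2 j1 j2) as [j [b1 [b2 _]]].
  exists (fobj D j), (c j), (comp B (fmap F (comp A (fmap D b1) a1)) k1),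
    (comp B (fmap F (comp A (fmap D b2) a2)) k2).
  split; [apply Hfp|split].
  - rewrite H1, Ha1, comp_assoc, <- fmap_comp, comp_assoc, (proj1 Hc). reflexivity.
  - rewrite H2, Ha2, comp_assoc, <- fmap_comp, comp_assoc, (proj1 Hc). reflexivity.
Qed.

End Main.

Section Main2.
Variables (OA OB : Type) (A : Cat OA) (B : Cat OB) (HA : strictly_lfp A) (HB : lfp B)
  (Hfg : forall X : OB, fin_gen B X <-> fin_pres B X) (F : Functor A B) (Hfb : finitely_bounded F).
Variables (SJ : Set) (J : Cat SJ) (D : Functor J A) (X : OA) (c : forall j, hom A (fobj D j) X)
  (HJ : filtered J) (Hc : is_colimit A D c)
  (Y : OB) (d : forall j, hom B (fobj F (fobj D j)) Y) (Hd : is_cocone B (Fcomp F D) d).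

Lemma W0 Q (HQ : fin_pres B Q) l (h1 h2 : hom B Q (fobj F (fobj D l))) :
  comp B (fmap F (c l)) h1 = comp B (fmap F (c l)) h2 -> comp B (d l) h1 = comp B (d l) h2.
Proof.
  intros E.
  destruct (JF OA OB A B HA HB F Hfb Q HQ (fobj D l) h1 h2) as [K [w [k1 [k2 [HK [H1 H2]]]]]].
  assert (E1 : comp B (fmap F (comp A (c l) w)) k1 = comp B (fmap F (comp A (c l) w)) k2).
  { rewrite fmap_comp, <- !comp_assoc, <- H1, <- H2. exact E. }
  destruct HA as [HAl Hs].
  destruct (image_lemma OA A HAl K X (comp A (c l) w) HK) as [N [e [n [Hn [HN Hne]]]]].
  destruct (Hs X N n Hn HN) as [u [[K2 [v2 [w2 [HK2 Hu]]]] Hun]].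
  destruct (fp_fact OA A K2 HK2 SJ J D X c HJ Hc w2) as [k [h' Hh']].
  assert (E2 : comp A (c k) (comp A h' (comp A v2 (comp A (c l) w))) = comp A (c l) w).
  { rewrite comp_assoc, <- Hh', comp_assoc, <- Hu, Hne, comp_assoc, Hun. reflexivity. }
  destruct (fp_ess2 OA A K HK SJ J D X c HJ Hc k l _ w E2) as [r [b [b' E3]]].
  assert (E3' : comp A (comp A (fmap D b) (comp A h' v2)) (comp A (c l) w) = comp A (fmap D b') w).
  { rewrite <- E3. rewrite !comp_assoc. reflexivity. }
  assert (Key : forall kk : hom B Q (fobj F K), comp B (d l) (comp B (fmap F w) kk) =
     comp B (d r) (comp B (fmap F (comp A (comp A (fmap D b) (comp A h' v2)) (comp A (c l) w))) kk)).
  { intro kk. rewrite <- (Hd l r b'). simpl. rewrite E3', fmap_comp, !comp_assoc. reflexivity. }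
  rewrite H1, H2, !Key.
  rewrite (fmap_comp F (comp A (fmap D b) (comp A h' v2)) (comp A (c l) w)).
  rewrite <- !comp_assoc. rewrite E1. reflexivity.
Qed.

Lemma Wkey Z j j' (g : hom B Z (fobj F (fobj D j))) (g' : hom B Z (fobj F (fobj D j'))) :
  comp B (fmap F (c j)) g = comp B (fmap F (c j')) g' -> comp B (d j) g = comp B (d j') g'.
Proof.
  intros E. apply (points_ext OB B HB). intros Q q HQ.
  destruct HJ as [_ [HJ2 _]]. destruct (HJ2 j j') as [l [a [a' _]]].
  rewrite <- (Hd j l a), <- (Hd j' l a'). simpl. rewrite <- !comp_assoc. apply (W0 Q HQ).
  rewrite !comp_assoc, <- !fmap_comp, (proj1 Hc), (proj1 Hc).
  rewrite E. reflexivity.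
Qed.

End Main2.

Lemma dir2 (OA OB : Type) (A : Cat OA) (B : Cat OB) (HA : strictly_lfp A) (HB : lfp B)
  (F : Functor A B) : finitely_bounded F -> finitary F.
Proof.
  intros Hfb SJ J D X c HJ Hc. split.
  - intros i j f. simpl. rewrite <- fmap_comp, (proj1 Hc). reflexivity.
  - intros Y d Hd.
    destruct HB as [HB1 [HB2 Hpres]].
    destruct (Hpres (fobj F X)) as [SK [K [E [p [HK [Hfp Hp]]]]]].
    assert (HS : forall k, exists q : {j : SJ & hom B (fobj E k) (fobj F (fobj D j))},
               p k = comp B (fmap F (c (projT1 q))) (projT2 q)).
    { intro k. destruct (SF OA OB A B HA (conj HB1 (conj HB2 Hpres)) F Hfb (fobj E k) (Hfp k) X (p k))
        as [K' [w [kk [HK' Hw]]]].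
      destruct (fp_fact OA A K' HK' SJ J D X c HJ Hc w) as [j [h Hh]].
      exists (existT _ j (comp B (fmap F h) kk)). simpl. rewrite Hw, Hh, fmap_comp, comp_assoc. reflexivity. }
    pose (qk := fun k => proj1_sig (constructive_indefinite_description _ (HS k))).
    assert (Hq : forall k, p k = comp B (fmap F (c (projT1 (qk k)))) (projT2 (qk k))).
    { intro k. unfold qk. destruct constructive_indefinite_description. assumption. }
    assert (W := Wkey OA OB A B HA (conj HB1 (conj HB2 Hpres)) F Hfb SJ J D X c HJ Hc Y d Hd).
    destruct (proj2 Hp Y (fun k => comp B (d (projT1 (qk k))) (projT2 (qk k)))) as [u [Hu1 Hu2]].
    { intros k k' f. simpl. rewrite <- comp_assoc. apply W.
      rewrite comp_assoc, <- Hq, <- Hq. exact (proj1 Hp k k' f). }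
    exists u. split.
    + intro j. apply (points_ext OB B (conj HB1 (conj HB2 Hpres))). intros Q q HQ.
      destruct (fp_fact OB B Q HQ SK K E (fobj F X) p HK Hp (comp B (fmap F (c j)) q)) as [k [r Hr]].
      simpl. rewrite <- comp_assoc, Hr, comp_assoc, Hu1. rewrite <- comp_assoc. apply W.
      rewrite comp_assoc, <- Hq. symmetry. exact Hr.
    + intros u' Hu'. apply Hu2. intro k. rewrite Hq, comp_assoc. simpl in Hu'. rewrite Hu'. reflexivity.
Qed.

Theorem theoremT (OA OB : Type) (A : Cat OA) (B : Cat OB) :
  strictly_lfp A -> lfp B ->
  (forall X : OB, fin_gen B X <-> fin_pres B X) ->
  forall F : Functor A B, finitary F <-> finitely_bounded F.
Proof.
  intros HA HB Hfg F. split.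
  - apply (dir1 OA OB A B HA Hfg F).
  - apply (dir2 OA OB A B HA HB F).
Qed.
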